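(* For every even integer $k\ge 2$ there exists a probabilistic single-item auction with $n=k+1$ bidders and $m=k+1$ item types such that the maximum expected revenue over all mixed signaling schemes is exactly twice the maximum expected revenue over all pure signaling schemes.
   Context: A probabilistic single-item auction consists of $n\ge 2$ bidders, $m$ item types, a probability distribution $(p_1,\dots,p_m)$ over types, and nonnegative valuations $v_{i,j}$ (value of bidder $i$ for an item of type $j$), all known to the auctioneer. The auctioneer observes the realized type and broadcasts a signal; bidders then participate in a second-price auction, each bidding their expected valuation conditional on the signal. A mixed signaling scheme is a finite set $\mathcal{S}$ of signals and a map $\varphi:[m]\times\mathcal{S}\to[0,1]$ with $\sum_{S\in\mathcal{S}}\varphi(j,S)=1$ for every type $j$; on type $j$ signal $S$ is sent with probability $\varphi(j,S)$. A pure signaling scheme is one with $\varphi(j,S)\in\{0,1\}$ for all $j,S$ (equivalently, a partition of the set of types). Writing $\psi_{i,j}=p_jv_{i,j}$ and $\mathrm{max2}$ for the second-largest entry of a list (counted with multiplicity), the expected revenue of $\varphi$ is $\sum_{S\in\mathcal{S}}\mathrm{max2}_i\big\{\sum_j \psi_{i,j}\varphi(j,S)\big\}$. *)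

(* Defs.v *)
From mathcomp Require Import all_boot all_order all_algebra.
Set Implicit Arguments. Unset Strict Implicit. Unset Printing Implicit Defensive.
Import Order.TTheory GRing.Theory Num.Theory.
Local Open Scope ring_scope.

(* Second-largest entry of a family x_1..x_n (counted with multiplicity):
   the entry at position 1 (0-based) of the list sorted in nonincreasing order. *)
Definition max2 (R : realDomainType) (n : nat) (x : 'I_n -> R) : R :=
  nth 0 (sort (fun a b : R => b <= a) [seq x i | i <- enum 'I_n]) 1.

Definition is_auction (R : realDomainType) (n m : nat)
    (p : 'I_m -> R) (v : 'I_n -> 'I_m -> R) : Prop :=
  (1 < n)%N /\ (forall j, 0 <= p j) /\ \sum_(j < m) p j = 1 /\
  (forall i j, 0 <= v i j).

Definition mixed_scheme (R : realDomainType) (m s : nat)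
    (phi : 'I_m -> 'I_s -> R) : Prop :=
  (forall j S, 0 <= phi j S /\ phi j S <= 1) /\
  (forall j, \sum_(S < s) phi j S = 1).

Definition pure_scheme (R : realDomainType) (m s : nat)
    (phi : 'I_m -> 'I_s -> R) : Prop :=
  mixed_scheme phi /\ (forall j S, phi j S = 0 \/ phi j S = 1).

Definition revenue (R : realDomainType) (n m s : nat)
    (p : 'I_m -> R) (v : 'I_n -> 'I_m -> R) (phi : 'I_m -> 'I_s -> R) : R :=
  \sum_(S < s) max2 (fun i : 'I_n => \sum_(j < m) p j * v i j * phi j S).

Definition max_mixed_revenue (R : realDomainType) (n m : nat)
    (p : 'I_m -> R) (v : 'I_n -> 'I_m -> R) (r : R) : Prop :=
  (exists (s : nat) (phi : 'I_m -> 'I_s -> R),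
      mixed_scheme phi /\ revenue p v phi = r) /\
  (forall (s : nat) (phi : 'I_m -> 'I_s -> R),
      mixed_scheme phi -> revenue p v phi <= r).

Definition max_pure_revenue (R : realDomainType) (n m : nat)
    (p : 'I_m -> R) (v : 'I_n -> 'I_m -> R) (r : R) : Prop :=
  (exists (s : nat) (phi : 'I_m -> 'I_s -> R),
      pure_scheme phi /\ revenue p v phi = r) /\
  (forall (s : nat) (phi : 'I_m -> 'I_s -> R),
      pure_scheme phi -> revenue p v phi <= r).

(* Main.v *)
Require Import Defs.
From mathcomp Require Import all_boot all_order all_algebra.
From mathcomp Require Import reals.
From mathcomp Require Import ring lra.
Import Order.TTheory GRing.Theory Num.Theory.
Local Open Scope ring_scope.
Section M2.
Variable R : realDomainType.

Lemma count_sorted_le1 (l : seq R) (P : pred R) :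
  sorted (fun a b : R => b <= a) l -> ~~ P (nth 0 l 1) ->
  (forall y z, y <= z -> P y -> P z) -> (count P l <= 1)%N.
Proof.
case: l => [|a [|b rest]] //= Hs Pb Hm; first by case: (P a).
rewrite (negbTE Pb) /=.
have Hall : all (fun y => b >= y) rest.
  apply: (order_path_min _ (proj2 (andP Hs))).
  by move=> x y z /= h1 h2; apply: le_trans h2 h1.
have -> : count P rest = 0%N.
  apply/eqP; rewrite -leqn0 leqNgt -has_count; apply/hasPn => y yr.
  apply/negP => Py; move/allP: Hall => /(_ y yr) hy.
  by move/negP: Pb; apply; apply: Hm Py.
by case: (P a).
Qed.

Lemma max2_lb n (x : 'I_n -> R) i i' : i != i' ->
  Num.min (x i) (x i') <= max2 x.
Proof.
move=> nii; rewrite /max2.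
set s := [seq x j | j <- enum 'I_n].
set l := sort _ s.
rewrite leNgt; apply/negP; rewrite lt_min => /andP [H1 H2].
pose P := (fun y : R => nth 0 l 1 < y).
have c1 : (count P l <= 1)%N.
  apply: count_sorted_le1.
  - by apply: sort_sorted => a b; apply: le_total.
  - by rewrite /P ltxx.
  - by move=> y z yz; rewrite /P => h; apply: lt_le_trans h yz.
have c2 : (2 <= count P s)%N.
  rewrite /s count_map.
  have hs : subpred (predU (pred1 i) (pred1 i')) (preim x P).
    by move=> j /orP [] /eqP -> /=; rewrite /P.
  apply: leq_trans (sub_count hs _).
  have := count_predUI (pred1 i) (pred1 i') (enum 'I_n).
  have e1 : count (pred1 i) (enum 'I_n) = 1%N
    by rewrite (count_uniq_mem _ (enum_uniq _)) mem_enum.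
  have e2 : count (pred1 i') (enum 'I_n) = 1%N
    by rewrite (count_uniq_mem _ (enum_uniq _)) mem_enum.
  have e3 : count (predI (pred1 i) (pred1 i')) (enum 'I_n) = 0%N.
    apply/eqP; rewrite -leqn0 leqNgt -has_count; apply/hasPn => j _ /=.
    by apply/negP => /andP [/eqP -> /eqP h]; move/eqP: nii.
  by rewrite e1 e2 e3 addn0 => ->.
have hp : perm_eq l s by rewrite /l perm_sort perm_refl.
have E := permP hp P.
by move: c1; rewrite E => /(leq_trans c2).
Qed.

Lemma max2_ub n (x : 'I_n -> R) i0 c : (1 < n)%N ->
  (forall i, i != i0 -> x i <= c) -> max2 x <= c.
Proof.
move=> hn hx; rewrite /max2.
set s := [seq x j | j <- enum 'I_n].
set l := sort _ s.
rewrite leNgt; apply/negP => H.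
pose P := (fun y : R => c < y).
have c1 : (count P s <= 1)%N.
  rewrite /s count_map.
  have hs : subpred (preim x P) (pred1 i0).
    move=> j /=; rewrite /P; apply: contraLR => /hx h.
    by rewrite -leNgt.
  apply: leq_trans (sub_count hs _) _.
  by rewrite (count_uniq_mem _ (enum_uniq _)) mem_enum.
have hsz : size l = n by rewrite size_sort size_map size_enum_ord.
have hsort : sorted (fun a b : R => b <= a) l
  by apply: sort_sorted => a b; apply: le_total.
have c2 : (2 <= count P l)%N.
  move: hsz hsort H; case: l => [|a [|b rest]] //=; try (move=> h; rewrite -h in hn; done).
  move=> _ /andP [hab _] hb.
  by rewrite /P hb (lt_le_trans hb hab).
have hp : perm_eq l s by rewrite /l perm_sort perm_refl.
have E := permP hp P.
by move: c1; rewrite -E => /(leq_trans c2).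
Qed.

Lemma eq_max2 n (x y : 'I_n -> R) : x =1 y -> max2 x = max2 y.
Proof. by move=> h; rewrite /max2 (eq_map h). Qed.
End M2.

Section Inst.
Variable R : realType.
Variable k : nat.
Hypothesis hk : (2 <= k)%N.

Definition w (i : 'I_k.+1) : R :=
  if val i == 0%N then 2 else if (val i < 3)%N then 1 else 0.
Definition pp (j : 'I_k.+1) : R := (k.+1%:R)^-1.
Definition vv (i j : 'I_k.+1) : R := if i == j then w i * k.+1%:R else 0.

Lemma w_ge0 i : 0 <= w i.
Proof. by rewrite /w; case: ifP => _ //; case: ifP. Qed.

Lemma w_le1 i : i != ord0 -> w i <= 1.
Proof.
move=> h; rewrite /w; case: ifP => [/eqP e|_].
  by move/eqP: h; case; apply: val_inj.
by case: ifP.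
Qed.

Lemma aE s (phi : 'I_k.+1 -> 'I_s -> R) i S :
  \sum_(j < k.+1) pp j * vv i j * phi j S = w i * phi i S.
Proof.
rewrite (bigD1 i) //= big1 ?addr0.
  rewrite /pp /vv eqxx.
  have hK : (k.+1%:R : R) != 0 by rewrite pnatr_eq0.
  by rewrite mulrCA mulVf ?mulr1.
by move=> j /negbTE hj; rewrite /vv eq_sym hj mulr0 mul0r.
Qed.

Lemma revE s (phi : 'I_k.+1 -> 'I_s -> R) :
  revenue pp vv phi = \sum_(S < s) max2 (fun i => w i * phi i S).
Proof. by apply: eq_bigr => S _; apply: eq_max2 => i; rewrite aE. Qed.

Definition i1 : 'I_k.+1 := inord 1.
Definition i2 : 'I_k.+1 := inord 2.
Lemma i1v : val i1 = 1%N. Proof. by apply: inordK; rewrite ltnS; apply: leq_trans hk. Qed.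
Lemma i2v : val i2 = 2%N. Proof. by apply: inordK; rewrite ltnS. Qed.
Lemma wi1 : w i1 = 1. Proof. by rewrite /w i1v. Qed.
Lemma wi2 : w i2 = 1. Proof. by rewrite /w i2v. Qed.
Lemma w0 : w ord0 = 2. Proof. by []. Qed.
Lemma wother i : val i != 0%N -> val i != 1%N -> val i != 2%N -> w i = 0.
Proof.
rewrite /w; case: i => [[|[|[|n]]] ?] //=.
Qed.
Lemma hn : (1 < k.+1)%N. Proof. by rewrite ltnS; apply: leq_trans hk. Qed.

Lemma mixed_ub s (phi : 'I_k.+1 -> 'I_s -> R) : mixed_scheme phi ->
  revenue pp vv phi <= 2.
Proof.
move=> [h01 hsum]; rewrite revE.
have <- : \sum_(S < s) (phi i1 S + phi i2 S) = 2 by rewrite big_split /= !hsum.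
apply: ler_sum => S _; apply: (@max2_ub _ _ _ ord0) => [|i hi]; first exact: hn.
have [a1 b1] := h01 i1 S; have [a2 b2] := h01 i2 S; have [a b] := h01 i S.
case: (eqVneq (val i) 1%N) => e1.
  have -> : i = i1 by apply: val_inj; rewrite e1 i1v.
  by rewrite wi1 mul1r lerDl.
case: (eqVneq (val i) 2%N) => e2.
  have -> : i = i2 by apply: val_inj; rewrite e2 i2v.
  by rewrite wi2 mul1r lerDr.
rewrite wother ?mul0r ?addr_ge0 //.
Qed.


Lemma eq_i1 (i : 'I_k.+1) : val i == 1%N -> i = i1.
Proof. by move/eqP=> e; apply: val_inj; rewrite e i1v. Qed.
Lemma eq_i2 (i : 'I_k.+1) : val i == 2%N -> i = i2.
Proof. by move/eqP=> e; apply: val_inj; rewrite e i2v. Qed.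
Lemma eq_i0 (i : 'I_k.+1) : val i == 0%N -> i = ord0.
Proof. by move/eqP=> e; apply: val_inj; rewrite e. Qed.

Lemma entry_le s (phi : 'I_k.+1 -> 'I_s -> R) S c i : 0 <= c ->
  (val i == 0%N -> 2 * phi i S <= c) -> (val i == 1%N -> phi i S <= c) ->
  (val i == 2%N -> phi i S <= c) -> w i * phi i S <= c.
Proof.
rewrite /w; case: i => [[|[|[|n]]] ?] /= hc h0 h1 h2.
- exact: h0.
- by rewrite mul1r; apply: h1.
- by rewrite mul1r; apply: h2.
- by rewrite mul0r.
Qed.

Definition phiM (j : 'I_k.+1) (S : 'I_2) : R :=
  if val j == 0%N then 2^-1 else if val j == 2%N then (if val S == 1%N then 1 else 0)
  else (if val S == 0%N then 1 else 0).

Lemma phiM_mixed : mixed_scheme phiM.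
Proof.
split.
  move=> j S; rewrite /phiM; case: ifP => _.
    by rewrite invr_ge0 ler0n /= invf_le1 // ?ler1n // ltr0n.
  by case: ifP => _; case: ifP.
move=> j; rewrite big_ord_recl big_ord_recl big_ord0 /phiM /=.
case: ifP => _; last by case: ifP => _ /=; rewrite ?addr0 ?add0r.
by rewrite addr0; field.
Qed.

Lemma max2_one s (phi : 'I_k.+1 -> 'I_s -> R) S j :
  j != ord0 -> 1 <= w ord0 * phi ord0 S -> w j * phi j S = 1 ->
  (forall i, i != ord0 -> w i * phi i S <= 1) ->
  max2 (fun i => w i * phi i S) = 1.
Proof.
move=> hj h0 h1 hub; apply/eqP; rewrite eq_le; apply/andP; split.
  by apply: (@max2_ub _ _ _ ord0) => //; exact: hn.
have := @max2_lb _ _ (fun i => w i * phi i S) ord0 j.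
rewrite eq_sym => /(_ hj); apply: le_trans.
by rewrite le_min h0 h1 lexx.
Qed.

Lemma mixed_rev : revenue pp vv phiM = 2.
Proof.
rewrite revE big_ord_recl big_ord_recl big_ord0 addr0.
have ub : forall S i, i != ord0 -> w i * phiM i S <= 1.
  move=> S i hi; apply: mulr_ile1; first exact: w_ge0.
  - by case: phiM_mixed => h _; case: (h i S).
  - exact: w_le1.
  - by case: phiM_mixed => h _; case: (h i S).
have h0 : forall S, w ord0 * phiM ord0 S = 1.
  by move=> S; rewrite w0 /phiM /= mulfV // pnatr_eq0.
rewrite (@max2_one 2%N phiM ord0 i1) ?(@max2_one 2%N phiM (lift ord0 ord0) i2) ?h0 //.
- by apply/negP => /eqP/(congr1 val); rewrite i2v.
- by rewrite wi2 /phiM i2v /= mul1r.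
- exact: ub.
- by apply/negP => /eqP/(congr1 val); rewrite i1v.
- by rewrite wi1 /phiM i1v /= mul1r.
- exact: ub.
Qed.


Lemma pure_ub s (phi : 'I_k.+1 -> 'I_s -> R) : pure_scheme phi ->
  revenue pp vv phi <= 1.
Proof.
move=> [[h01 hsum] hb]; rewrite revE.
case: (pickP (fun S => phi ord0 S == 1)) => [Sz /eqP hz | hnone]; last first.
  exfalso; have := hsum ord0; rewrite big1 => [/eqP|S _].
    by rewrite eq_sym oner_eq0.
  by case: (hb ord0 S) => // h; move: (hnone S); rewrite h eqxx.
have hz0 : forall S, S != Sz -> phi ord0 S = 0.
  apply: psumr_eq0P => [S _|]; first by case: (h01 ord0 S).
  by have := hsum ord0; rewrite (bigD1 Sz) //= hz; lra.
have other : forall e f, (e == i1 /\ f == i2) \/ (e == i2 /\ f == i1) ->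
    forall S, S != Sz -> max2 (fun i => w i * phi i S) <= phi f S.
  move=> e f hef S hS; apply: (@max2_ub _ _ _ e) => [|i hi]; first exact: hn.
  have [a b] := h01 f S.
  apply: entry_le => // [/eq_i0 ->|/eq_i1 e1|/eq_i2 e2].
  - by rewrite hz0 // mulr0.
  - by case: hef => [[/eqP he /eqP hf]|[/eqP he /eqP hf]];
      [move: hi; rewrite e1 he eqxx | rewrite e1 hf].
  - by case: hef => [[/eqP he /eqP hf]|[/eqP he /eqP hf]];
      [rewrite e2 hf | move: hi; rewrite e2 he eqxx].
have zb : forall f, f = i1 \/ f = i2 ->
    (forall g, g = i1 \/ g = i2 -> phi g Sz <= phi f Sz) ->
    max2 (fun i => w i * phi i Sz) <= phi f Sz.
  move=> f hf hg; apply: (@max2_ub _ _ _ ord0) => [|i hi]; first exact: hn.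
  have [a b] := h01 f Sz.
  apply: entry_le => // [/eq_i0 e0|/eq_i1 ->|/eq_i2 ->].
  - by move: hi; rewrite e0 eqxx.
  - by apply: hg; left.
  - by apply: hg; right.
rewrite (bigD1 Sz) //=.
case/orP: (le_total (phi i1 Sz) (phi i2 Sz)) => huv.
  have := hsum i2; rewrite (bigD1 Sz) //= => <-.
  apply: lerD.
    by apply: zb; [right | move=> g [] ->].
  by apply: ler_sum => S hS; apply: (other i1); [left|].
have := hsum i1; rewrite (bigD1 Sz) //= => <-.
apply: lerD.
  by apply: zb; [left | move=> g [] ->].
by apply: ler_sum => S hS; apply: (other i2); [right|].
Qed.

Definition phiP (j : 'I_k.+1) (S : 'I_1) : R := 1.

Lemma phiP_pure : pure_scheme phiP.
Proof.
split; last by move=> j S; right.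
split; first by move=> j S; rewrite /phiP ler01 lexx.
by move=> j; rewrite big_ord1.
Qed.

Lemma pure_rev : revenue pp vv phiP = 1.
Proof.
rewrite revE big_ord1 (@max2_one 1%N phiP ord0 i1) //.
- by apply/negP => /eqP/(congr1 val); rewrite i1v.
- by rewrite /phiP w0 mulr1 ler1n.
- by rewrite /phiP wi1 mulr1.
- by move=> i hi; rewrite /phiP mulr1; apply: w_le1.
Qed.

End Inst.

Theorem theorem1 (R : realType) (k : nat) (hk : (2 <= k)%N) (hev : ~~ odd k) :
  exists (p : 'I_k.+1 -> R) (v : 'I_k.+1 -> 'I_k.+1 -> R) (rmix rpure : R),
    is_auction p v /\
    max_mixed_revenue p v rmix /\
    max_pure_revenue p v rpure /\
    0 < rpure /\
    rmix = 2 * rpure.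
Proof.
exists (@pp R k), (@vv R k), 2, 1.
split; last split; last split; last split.
- split; first exact: hn.
  split; first by move=> j; rewrite /pp invr_ge0 ler0n.
  split.
    rewrite /pp sumr_const card_ord -[X in X *+ _]mulr1 -mulrnAr mulVf //.
    by rewrite pnatr_eq0.
  move=> i j; rewrite /vv; case: ifP => _ //.
  by apply: mulr_ge0; [exact: w_ge0 | exact: ler0n].
- split; first by exists 2%N, (@phiM R k); split; [exact: phiM_mixed | exact: mixed_rev].
  by move=> s phi hphi; apply: mixed_ub.
- split; first by exists 1%N, (@phiP R k); split; [exact: phiP_pure | exact: pure_rev].
  by move=> s phi hphi; apply: pure_ub.
- exact: ltr01.
- by rewrite mulr1.
Qed.
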